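(* Assume $A_n$ satisfies (C1) and (C2), and let $(\beta,B)\in\Theta$. Then $$\limsup_{n\to\infty}\frac1n\,\mathbb E_{n,\beta,B}\Big[\sum_{i=1}^n\Big(m_i(\mathbf X)-\sum_{j=1}^nA_n(i,j)\tanh(\beta m_j(\mathbf X)+B)\Big)\Big]^2<\infty.$$
   Context: For each $n$, $A_n$ is a known symmetric $n\times n$ matrix with non-negative entries and zero diagonal. The Ising model is $\mathbb P_{n,\beta,B}(\mathbf X=\mathbf x)=Z_n(\beta,B)^{-1}\exp(\frac{\beta}{2}\mathbf x^\top A_n\mathbf x+B\sum_i x_i)$ on $\{-1,1\}^n$, with expectation $\mathbb E_{n,\beta,B}$. (C1): there is a constant $\gamma<\infty$ with $\max_{i}\sum_{j}A_n(i,j)\le\gamma$ for all $n$; (C2): $\liminf_n\frac1n\sum_{i,j}A_n(i,j)>0$. $\Theta=\{(\beta,B):\beta>0,B\ne0\}$. $m_i(\mathbf x)=\sum_jA_n(i,j)x_j$. *)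

(* Defs.v *)
From Stdlib Require Import Reals Lra Lia Arith.
Open Scope R_scope.

Fixpoint fsum (n : nat) (f : nat -> R) : R :=
  match n with
  | O => 0
  | S m => fsum m f + f m
  end.

(* Configurations x in {-1,1}^n are encoded by naturals k < 2^n:
   x_i = +1 if bit i of k is set, -1 otherwise. This is a bijection
   between {0,..,2^n-1} and {-1,1}^n. *)
Definition spin (k i : nat) : R := if Nat.testbit k i then 1 else -1.

(* A sequence of interaction matrices: A n i j = A_n(i,j) for i,j < n. *)
Definition Mat := nat -> nat -> nat -> R.

Definition valid_matrices (A : Mat) : Prop :=
  forall n, (forall i j, (i < n)%nat -> (j < n)%nat -> A n i j = A n j i) /\
            (forall i j, (i < n)%nat -> (j < n)%nat -> 0 <= A n i j) /\
            (forall i, (i < n)%nat -> A n i i = 0).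

Definition cond_C1 (A : Mat) : Prop :=
  exists gamma : R, forall n i, (i < n)%nat -> fsum n (fun j => A n i j) <= gamma.

(* (C2): liminf_n (1/n) sum_{i,j} A_n(i,j) > 0, i.e. the sequence is
   eventually bounded below by some positive constant. *)
Definition cond_C2 (A : Mat) : Prop :=
  exists c : R, 0 < c /\ exists N : nat, forall n, (N <= n)%nat ->
    c <= / INR n * fsum n (fun i => fsum n (fun j => A n i j)).

Definition mloc (A : Mat) (n k i : nat) : R := fsum n (fun j => A n i j * spin k j).

Definition weight (A : Mat) (n : nat) (beta B : R) (k : nat) : R :=
  exp (beta / 2 * fsum n (fun i => fsum n (fun j => spin k i * A n i j * spin k j))
       + B * fsum n (fun i => spin k i)).

Definition Zn (A : Mat) (n : nat) (beta B : R) : R :=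
  fsum (2 ^ n) (fun k => weight A n beta B k).

Definition Expect (A : Mat) (n : nat) (beta B : R) (f : nat -> R) : R :=
  fsum (2 ^ n) (fun k => weight A n beta B k * f k) / Zn A n beta B.

Definition Qstat (A : Mat) (n : nat) (beta B : R) (k : nat) : R :=
  fsum n (fun i => mloc A n k i
                   - fsum n (fun j => A n i j * tanh (beta * mloc A n k j + B))).

(* Main.v *)
Require Import Defs.
From Stdlib Require Import Reals Lra Lia Arith List Permutation.
Open Scope R_scope.

Lemma fsum_ext n f g : (forall i, (i < n)%nat -> f i = g i) -> fsum n f = fsum n g.
Proof. induction n; simpl; intros H; auto. rewrite IHn by (intros; apply H; lia). rewrite H by lia. auto. Qed.

Lemma fsum_plus n f g : fsum n (fun i => f i + g i) = fsum n f + fsum n g.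
Proof. induction n; simpl; [ring|]. rewrite IHn; ring. Qed.

Lemma fsum_minus n f g : fsum n (fun i => f i - g i) = fsum n f - fsum n g.
Proof. induction n; simpl; [ring|]. rewrite IHn; ring. Qed.

Lemma fsum_scal n c f : fsum n (fun i => c * f i) = c * fsum n f.
Proof. induction n; simpl; [ring|]. rewrite IHn; ring. Qed.

Lemma fsum_scalr n c f : fsum n (fun i => f i * c) = fsum n f * c.
Proof. induction n; simpl; [ring|]. rewrite IHn; ring. Qed.

Lemma fsum_const n c : fsum n (fun _ => c) = INR n * c.
Proof. induction n; simpl fsum; [simpl; ring|]. rewrite IHn, S_INR; ring. Qed.

Lemma fsum_le n f g : (forall i, (i < n)%nat -> f i <= g i) -> fsum n f <= fsum n g.
Proof. induction n; simpl; intros H; [lra|]. assert (H1 := H n ltac:(lia)).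
 assert (fsum n f <= fsum n g) by (apply IHn; intros; apply H; lia). lra. Qed.

Lemma fsum_nonneg n f : (forall i, (i < n)%nat -> 0 <= f i) -> 0 <= fsum n f.
Proof. intros H. replace 0 with (fsum n (fun _ => 0)). apply fsum_le; auto.
 rewrite fsum_const; ring. Qed.

Lemma fsum_pos n f : (0 < n)%nat -> (forall i, (i < n)%nat -> 0 < f i) -> 0 < fsum n f.
Proof. destruct n; [lia|]. intros _ H; simpl.
 assert (0 <= fsum n f) by (apply fsum_nonneg; intros; left; apply H; lia).
 assert (0 < f n) by (apply H; lia). lra. Qed.

Lemma fsum_swap n m (f : nat -> nat -> R) :
  fsum n (fun i => fsum m (fun j => f i j)) = fsum m (fun j => fsum n (fun i => f i j)).
Proof. induction n; simpl. - rewrite fsum_const; simpl; ring.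
 - rewrite IHn, <- fsum_plus. reflexivity. Qed.

Lemma fsum_delta n j g : (j < n)%nat -> fsum n (fun l => if Nat.eqb l j then g l else 0) = g j.
Proof. induction n; intros H; [lia|]. simpl.
 destruct (Nat.eq_dec n j).
 - subst. rewrite Nat.eqb_refl.
   replace (fsum j _) with (fsum j (fun _ => 0)). rewrite fsum_const; ring.
   all: apply fsum_ext; intros i Hi; destruct (Nat.eqb_spec i j); [lia|auto].
 - rewrite IHn by lia. destruct (Nat.eqb_spec n j); [lia|ring]. Qed.

Definition lsum (l : list R) := fold_right Rplus 0 l.
Lemma lsum_perm l l' : Permutation l l' -> lsum l = lsum l'.
Proof. induction 1; unfold lsum in *; simpl; try lra; congruence. Qed.

Lemma lsum_app1 l r : lsum (l ++ r :: nil) = lsum l + r.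
Proof. induction l; unfold lsum in *; simpl; [ring|]. rewrite IHl; ring. Qed.

Lemma fsum_lsum n f : fsum n f = lsum (map f (seq 0 n)).
Proof. induction n; [reflexivity|]. cbn [fsum]. rewrite seq_S, map_app, IHn; cbn [map]; rewrite lsum_app1. reflexivity. Qed.

Lemma fsum_invol N (p : nat -> nat) f :
  (forall k, (k < N)%nat -> (p k < N)%nat) -> (forall k, p (p k) = k) ->
  fsum N (fun k => f (p k)) = fsum N f.
Proof. intros Hb Hi. rewrite !fsum_lsum. apply lsum_perm.
 replace (map (fun k => f (p k)) (seq 0 N)) with (map f (map p (seq 0 N)))
   by (rewrite map_map; auto).
 apply Permutation_map. apply Permutation_map_same_l.
 - apply FinFun.Injective_map_NoDup; [|apply seq_NoDup].
   intros a b E. rewrite <- (Hi a), <- (Hi b), E; auto.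
 - intros x Hx. apply in_map_iff in Hx. destruct Hx as [y [<- Hy]].
   apply in_seq in Hy. apply in_seq. specialize (Hb y ltac:(lia)). lia. Qed.

Definition flip (j k : nat) : nat := Nat.lxor k (2 ^ j).

Lemma flip_invol j k : flip j (flip j k) = k.
Proof. unfold flip. rewrite Nat.lxor_assoc, Nat.lxor_nilpotent, Nat.lxor_0_r; auto. Qed.

Lemma flip_bit j k i : Nat.testbit (flip j k) i = xorb (Nat.testbit k i) (Nat.eqb j i).
Proof. unfold flip. rewrite Nat.lxor_spec, Nat.pow2_bits_eqb; auto. Qed.

Lemma flip_bound n j k : (j < n)%nat -> (k < 2 ^ n)%nat -> (flip j k < 2 ^ n)%nat.
Proof. intros Hj Hk.
 assert (E : flip j k = flip j k mod 2 ^ n).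
 { apply Nat.bits_inj. intros m. destruct (Nat.lt_ge_cases m n).
   - rewrite Nat.mod_pow2_bits_low; auto.
   - rewrite Nat.mod_pow2_bits_high by auto. rewrite flip_bit.
     rewrite <- (Nat.mod_small k (2^n)) by auto. rewrite Nat.mod_pow2_bits_high by auto.
     destruct (Nat.eqb_spec j m); [lia|auto]. }
 rewrite E. apply Nat.mod_upper_bound. apply Nat.pow_nonzero. lia. Qed.

Lemma spin_flip j k i : spin (flip j k) i = spin k i + (if Nat.eqb i j then -2 * spin k j else 0).
Proof. unfold spin. rewrite flip_bit. destruct (Nat.eqb_spec i j).
 - subst. rewrite Nat.eqb_refl. destruct (Nat.testbit k j); simpl; ring.
 - destruct (Nat.eqb_spec j i); [lia|]. destruct (Nat.testbit k i); simpl; ring. Qed.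

Lemma spin_cases k i : spin k i = 1 \/ spin k i = -1.
Proof. unfold spin; destruct (Nat.testbit k i); auto. Qed.

Lemma mul_delta (a c : R) l j : a * (if Nat.eqb l j then c else 0) = if Nat.eqb l j then a * c else 0.
Proof. destruct (Nat.eqb l j); ring. Qed.
Lemma delta_mul (a c : R) l j : (if Nat.eqb l j then c else 0) * a = if Nat.eqb l j then c * a else 0.
Proof. destruct (Nat.eqb l j); ring. Qed.

Lemma mloc_flip A n j k i : (j < n)%nat ->
  mloc A n (flip j k) i = mloc A n k i - 2 * A n i j * spin k j.
Proof. intros Hj. unfold mloc.
 rewrite (fsum_ext n _ (fun l => A n i l * spin k l + (if Nat.eqb l j then A n i l * (-2 * spin k j) else 0))).
 - rewrite fsum_plus, fsum_delta by auto. ring.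
 - intros l _. rewrite spin_flip. destruct (Nat.eqb l j); ring. Qed.

Lemma lin_flip n j k : (j < n)%nat -> fsum n (fun i => spin (flip j k) i) = fsum n (fun i => spin k i) - 2 * spin k j.
Proof. intros Hj. rewrite (fsum_ext n _ (fun l => spin k l + (if Nat.eqb l j then -2 * spin k j else 0))).
 - rewrite fsum_plus, fsum_delta by auto. change (fsum n (fun i => spin k i)) with (fsum n (spin k)). ring.
 - intros l _. apply spin_flip. Qed.

Lemma qf_flip A n j k : valid_matrices A -> (j < n)%nat ->
  fsum n (fun i => fsum n (fun l => spin (flip j k) i * A n i l * spin (flip j k) l)) =
  fsum n (fun i => fsum n (fun l => spin k i * A n i l * spin k l)) - 4 * spin k j * mloc A n k j.
Proof. intros HV Hj. destruct (HV n) as [Hs [_ Hd]].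
 set (x := spin k). set (d := fun i => if Nat.eqb i j then -2 * x j else 0).
 rewrite (fsum_ext n _ (fun i => fsum n (fun l => x i * A n i l * x l)
      + (d i * mloc A n k i + x i * A n i j * (-2 * x j) + d i * A n i j * (-2 * x j)))).
 - rewrite fsum_plus. rewrite !fsum_plus.
   unfold d. rewrite (fsum_ext n (fun i => (if Nat.eqb i j then -2 * x j else 0) * mloc A n k i)
      (fun i => if Nat.eqb i j then -2 * x j * mloc A n k i else 0)) by (intros; apply delta_mul).
   rewrite (fsum_ext n (fun i => (if Nat.eqb i j then -2 * x j else 0) * A n i j * (-2 * x j))
      (fun i => if Nat.eqb i j then -2 * x j * A n i j * (-2 * x j) else 0))
      by (intros; destruct (Nat.eqb i j); ring).
   rewrite !fsum_delta by auto. rewrite Hd by auto.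
   rewrite (fsum_ext n (fun i => x i * A n i j * (-2 * x j)) (fun i => (-2 * x j) * (A n j i * spin k i)))
     by (intros i Hi; rewrite Hs by auto; unfold x; ring).
   rewrite fsum_scal. fold (mloc A n k j). ring.
 - intros i Hi. fold x.
   rewrite (fsum_ext n _ (fun l => x i * A n i l * x l + (d i * (A n i l * spin k l)
       + (if Nat.eqb l j then (x i + d i) * A n i l * (-2 * x j) else 0)))).
   + rewrite fsum_plus, fsum_plus, fsum_scal, fsum_delta by auto. fold (mloc A n k i). ring.
   + intros l Hl. rewrite !spin_flip. fold x. fold (d i). destruct (Nat.eqb l j); unfold x; ring. Qed.

Lemma weight_flip A n beta B j k : valid_matrices A -> (j < n)%nat ->
  weight A n beta B (flip j k) = weight A n beta B k * exp (-2 * spin k j * (beta * mloc A n k j + B)).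
Proof. intros HV Hj. unfold weight. rewrite qf_flip, lin_flip by auto. rewrite <- exp_plus. f_equal. lra. Qed.

Lemma mloc_flip_self A n j k : valid_matrices A -> (j < n)%nat -> mloc A n (flip j k) j = mloc A n k j.
Proof. intros HV Hj. rewrite mloc_flip by auto. destruct (HV n) as [_ [_ Hd]]. rewrite Hd by auto. ring. Qed.

Lemma tanh_exp h : tanh h = (exp h - / exp h) / (exp h + / exp h).
Proof. unfold tanh, sinh, cosh. rewrite exp_Ropp. assert (0 < exp h) by apply exp_pos.
 assert (0 < / exp h) by (apply Rinv_0_lt_compat; auto). field. split; [lra|nra]. Qed.

Lemma pair_zero x h : (x = 1 \/ x = -1) ->
  (x - tanh h) + exp (-2 * x * h) * (- x - tanh h) = 0.
Proof. intros Hx. rewrite tanh_exp. assert (Ha : 0 < exp h) by apply exp_pos.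
 assert (0 < / exp h) by (apply Rinv_0_lt_compat; auto).
 destruct Hx as [-> | ->].
 - replace (-2 * 1 * h) with (- h + - h) by ring. rewrite exp_plus, exp_Ropp. field. split; [lra|nra].
 - replace (-2 * -1 * h) with (h + h) by ring. rewrite exp_plus. field. split; [lra|nra]. Qed.

Lemma zero_lemma A n beta B j g : valid_matrices A -> (j < n)%nat ->
  (forall k, (k < 2 ^ n)%nat -> g (flip j k) = g k) ->
  fsum (2 ^ n) (fun k => weight A n beta B k * ((spin k j - tanh (beta * mloc A n k j + B)) * g k)) = 0.
Proof. intros HV Hj Hg.
 set (F := fun k => weight A n beta B k * ((spin k j - tanh (beta * mloc A n k j + B)) * g k)).
 assert (H1 : fsum (2 ^ n) (fun k => F (flip j k)) = fsum (2 ^ n) F).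
 { apply fsum_invol. intros; apply flip_bound; auto. apply flip_invol. }
 assert (H2 : fsum (2 ^ n) (fun k => F k + F (flip j k)) = 0).
 { rewrite (fsum_ext _ _ (fun _ => 0)). rewrite fsum_const; ring.
   intros k Hk. unfold F. rewrite weight_flip, mloc_flip_self, Hg by auto.
   rewrite spin_flip, Nat.eqb_refl.
   set (x := spin k j). set (h := beta * mloc A n k j + B).
   replace (x + -2 * x) with (- x) by ring.
   transitivity (weight A n beta B k * g k * ((x - tanh h) + exp (-2 * x * h) * (- x - tanh h))).
   - unfold h. ring.
   - rewrite pair_zero. ring. apply spin_cases. }
 rewrite fsum_plus in H2. fold F. lra. Qed.

Lemma tanh_exp2 x : tanh x = (exp (2 * x) - 1) / (exp (2 * x) + 1).
Proof. rewrite tanh_exp. replace (2 * x) with (x + x) by ring. rewrite exp_plus.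
 assert (0 < exp x) by apply exp_pos. field. split; nra. Qed.

Lemma tanh_lip_aux a b : b <= a -> 0 <= tanh a - tanh b <= 4 * (a - b).
Proof. intros Hab. rewrite !tanh_exp2.
 set (d := a - b). set (v := exp (2 * b)). set (w := exp (2 * d)).
 assert (Hu : exp (2 * a) = v * w) by (unfold v, w, d; rewrite <- exp_plus; f_equal; ring).
 rewrite Hu. assert (Hv : 0 < v) by apply exp_pos.
 assert (Hw1 : 1 <= w) by (unfold w; pose proof (exp_ineq1_le (2 * d)); unfold d in *; lra).
 assert (Hw2 : w - 1 <= 2 * d * w).
 { pose proof (exp_ineq1_le (- (2 * d))). rewrite exp_Ropp in H. fold w in H.
   assert (0 < w) by lra. apply Rmult_le_compat_r with (r := w) in H; [|lra].
   rewrite Rinv_l in H by lra. nra. }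
 replace ((v * w - 1) / (v * w + 1) - (v - 1) / (v + 1)) with (2 * v * (w - 1) / ((v * w + 1) * (v + 1)))
   by (field; split; nra).
 assert (HD : 0 < (v * w + 1) * (v + 1)) by nra.
 split.
 - unfold Rdiv. apply Rmult_le_pos; [nra|]. left; apply Rinv_0_lt_compat; auto.
 - apply Rmult_le_reg_r with (r := (v * w + 1) * (v + 1)); auto.
   unfold Rdiv. rewrite Rmult_assoc, Rinv_l by lra. assert (0 <= d) by (unfold d; lra). nra. Qed.

Lemma tanh_lip a b : Rabs (tanh a - tanh b) <= 4 * Rabs (a - b).
Proof. destruct (Rle_lt_dec b a).
 - pose proof (tanh_lip_aux a b r). rewrite !Rabs_pos_eq by lra. lra.
 - pose proof (tanh_lip_aux b a ltac:(lra)). rewrite Rabs_left1 by lra. rewrite Rabs_left by lra. lra. Qed.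

Lemma tanh_bound x : Rabs (tanh x) <= 1.
Proof. rewrite tanh_exp2. assert (0 < exp (2 * x)) by apply exp_pos.
 apply Rabs_le. split.
 - apply Rmult_le_reg_r with (r := exp (2*x) + 1); [lra|]. unfold Rdiv. rewrite Rmult_assoc, Rinv_l by lra. lra.
 - apply Rmult_le_reg_r with (r := exp (2*x) + 1); [lra|]. unfold Rdiv. rewrite Rmult_assoc, Rinv_l by lra. lra. Qed.

Lemma Rabs_le_between a b : Rabs a <= b -> -b <= a <= b.
Proof. unfold Rabs; destruct (Rcase_abs a); intros; lra. Qed.

Definition Dv A n beta B l k := spin k l - tanh (beta * mloc A n k l + B).
Definition cc (A : Mat) n l := fsum n (fun i => A n i l).

Lemma Q_rewrite A n beta B k : Qstat A n beta B k = fsum n (fun l => cc A n l * Dv A n beta B l k).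
Proof. unfold Qstat, mloc.
 rewrite (fsum_ext n _ (fun i => fsum n (fun l => A n i l * Dv A n beta B l k))).
 - rewrite fsum_swap. apply fsum_ext. intros l _. unfold cc. rewrite <- fsum_scalr. reflexivity.
 - intros i _. rewrite <- fsum_minus. apply fsum_ext. intros l _. unfold Dv, mloc. ring. Qed.

Lemma sq_sum n f : (fsum n f) ^ 2 = fsum n (fun j => fsum n (fun l => f j * f l)).
Proof. replace ((fsum n f)^2) with (fsum n f * fsum n f) by ring.
 rewrite <- fsum_scalr. apply fsum_ext. intros j _. rewrite <- fsum_scal. reflexivity. Qed.

Lemma Dv_bound A n beta B l k : Rabs (Dv A n beta B l k) <= 2.
Proof. unfold Dv. pose proof (tanh_bound (beta * mloc A n k l + B)).
 destruct (spin_cases k l) as [-> | ->]; apply Rabs_le; apply Rabs_le_between in H; lra. Qed.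

Lemma pair_bound A n beta B j l : valid_matrices A -> 0 < beta -> (j < n)%nat -> (l < n)%nat ->
  fsum (2 ^ n) (fun k => weight A n beta B k * (Dv A n beta B j k * Dv A n beta B l k)) <=
  ((if Nat.eqb j l then 4 else 0) + 8 * beta * A n l j) * Zn A n beta B.
Proof. intros HV Hb Hj Hl. destruct (HV n) as [Hs [Hp Hd]]. unfold Zn.
 rewrite <- fsum_scal.
 destruct (Nat.eqb_spec j l).
 - subst. rewrite Hd by auto. apply fsum_le. intros k _.
   assert (0 < weight A n beta B k) by apply exp_pos.
   pose proof (Dv_bound A n beta B l k).
   assert (Dv A n beta B l k * Dv A n beta B l k <= 4).
   { apply Rabs_le_between in H0. nra. }
   nra.
 - set (tp := fun k => tanh (beta * (mloc A n k l - A n l j * spin k j) + B)).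
   rewrite (fsum_ext _ _ (fun k => weight A n beta B k * ((spin k j - tanh (beta * mloc A n k j + B)) * (spin k l - tp k))
        + weight A n beta B k * (Dv A n beta B j k * (tp k - tanh (beta * mloc A n k l + B))))).
   2:{ intros k _. unfold Dv. ring. }
   rewrite fsum_plus, zero_lemma; auto.
   2:{ intros k Hk. unfold tp. rewrite spin_flip, mloc_flip, spin_flip by auto.
       destruct (Nat.eqb_spec l j); [lia|]. rewrite Nat.eqb_refl.
       replace (mloc A n k l - 2 * A n l j * spin k j - A n l j * (spin k j + -2 * spin k j)) with (mloc A n k l - A n l j * spin k j) by ring. ring. }
   rewrite Rplus_0_l. apply fsum_le. intros k _.
   assert (0 < weight A n beta B k) by apply exp_pos.
   pose proof (Dv_bound A n beta B j k).
   pose proof (tanh_lip (beta * (mloc A n k l - A n l j * spin k j) + B) (beta * mloc A n k l + B)).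
   replace (beta * (mloc A n k l - A n l j * spin k j) + B - (beta * mloc A n k l + B))
     with (- beta * A n l j * spin k j) in H1 by ring.
   assert (Rabs (- beta * A n l j * spin k j) = beta * A n l j).
   { assert (0 <= A n l j) by (apply Hp; auto).
     destruct (spin_cases k j) as [-> | ->]; [rewrite Rabs_left1 by nra|rewrite Rabs_pos_eq by nra]; ring. }
   rewrite H2 in H1. fold (tp k) in H1.
   assert (Rabs (Dv A n beta B j k * (tp k - tanh (beta * mloc A n k l + B))) <= 8 * beta * A n l j).
   { rewrite Rabs_mult. assert (0 <= Rabs (tp k - tanh (beta * mloc A n k l + B))) by apply Rabs_pos.
     assert (0 <= Rabs (Dv A n beta B j k)) by apply Rabs_pos. nra. }
   apply Rabs_le_between in H3. nra. Qed.

Theorem lemma3 (A : Mat) (beta B : R) :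
  valid_matrices A -> cond_C1 A -> cond_C2 A -> 0 < beta -> B <> 0 ->
  exists M : R, exists N : nat, forall n, (N <= n)%nat ->
    / INR n * Expect A n beta B (fun k => (Qstat A n beta B k) ^ 2) <= M.
Proof.
 intros HV [g Hg] _ Hb _.
 assert (Hg0 : 0 <= g).
 { specialize (Hg 1%nat 0%nat ltac:(lia)). simpl in Hg. destruct (HV 1%nat) as [_ [Hp _]].
   specialize (Hp 0%nat 0%nat ltac:(lia) ltac:(lia)). lra. }
 exists (4 * g ^ 2 + 8 * beta * g ^ 3), 1%nat. intros n Hn.
 destruct (HV n) as [Hs [Hp Hd]].
 assert (HZ : 0 < Zn A n beta B).
 { unfold Zn. apply fsum_pos. apply Nat.neq_0_lt_0, Nat.pow_nonzero; lia. intros; apply exp_pos. }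
 assert (Hc0 : forall l, (l < n)%nat -> 0 <= cc A n l).
 { intros l Hl. apply fsum_nonneg. intros; apply Hp; auto. }
 assert (Hc1 : forall l, (l < n)%nat -> cc A n l <= g).
 { intros l Hl. unfold cc. rewrite (fsum_ext _ _ (fun i => A n l i)). apply Hg; auto.
   intros; apply Hs; auto. }
 assert (HnR : 0 < INR n) by (apply lt_0_INR; lia).
 set (K := 4 * g ^ 2 + 8 * beta * g ^ 3).
 assert (HS : fsum (2 ^ n) (fun k => weight A n beta B k * Qstat A n beta B k ^ 2) <= INR n * K * Zn A n beta B).
 { rewrite (fsum_ext _ _ (fun k => fsum n (fun j => fsum n (fun l =>
       cc A n j * cc A n l * (weight A n beta B k * (Dv A n beta B j k * Dv A n beta B l k)))))).
   2:{ intros k _. rewrite Q_rewrite, sq_sum, <- fsum_scal. apply fsum_ext. intros j _.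
       rewrite <- fsum_scal. apply fsum_ext. intros l _. ring. }
   rewrite fsum_swap.
   rewrite (fsum_ext n _ (fun j => fsum n (fun l => cc A n j * cc A n l *
       fsum (2 ^ n) (fun k => weight A n beta B k * (Dv A n beta B j k * Dv A n beta B l k))))).
   2:{ intros j _. rewrite fsum_swap. apply fsum_ext. intros l _. apply fsum_scal. }
   replace (INR n * K * Zn A n beta B) with (fsum n (fun _ => K * Zn A n beta B)) by (rewrite fsum_const; ring).
   apply fsum_le. intros j Hj.
   apply Rle_trans with (fsum n (fun l => cc A n j * cc A n l *
        (((if Nat.eqb l j then 4 else 0) + 8 * beta * A n l j) * Zn A n beta B))).
   { apply fsum_le. intros l Hl. apply Rmult_le_compat_l.
     - apply Rmult_le_pos; auto.
     - rewrite Nat.eqb_sym. apply pair_bound; auto. }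
   rewrite (fsum_ext n _ (fun l => (if Nat.eqb l j then cc A n j * cc A n l * 4 * Zn A n beta B else 0)
          + cc A n j * cc A n l * 8 * beta * A n l j * Zn A n beta B)).
   2:{ intros l _. destruct (Nat.eqb l j); ring. }
   rewrite fsum_plus, fsum_delta by auto.
   apply Rle_trans with (cc A n j * cc A n j * 4 * Zn A n beta B +
       fsum n (fun l => g * g * 8 * beta * Zn A n beta B * A n l j)).
   { apply Rplus_le_compat_l. apply fsum_le. intros l Hl.
     assert (0 <= A n l j) by (apply Hp; auto).
     pose proof (Hc0 j Hj). pose proof (Hc0 l Hl). pose proof (Hc1 j Hj). pose proof (Hc1 l Hl).
     assert (cc A n j * cc A n l <= g * g) by nra.
     assert (0 <= 8 * beta * Zn A n beta B * A n l j) by (apply Rmult_le_pos; [|auto]; nra).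
     nra. }
   rewrite fsum_scal. fold (cc A n j).
   pose proof (Hc0 j Hj). pose proof (Hc1 j Hj).
   assert (cc A n j * cc A n j <= g * g) by nra.
   assert (0 <= g * g * 8 * beta * Zn A n beta B) by (apply Rmult_le_pos; [|lra]; apply Rmult_le_pos; [|lra]; nra).
   assert (cc A n j * cc A n j * 4 * Zn A n beta B <= g * g * 4 * Zn A n beta B) by nra.
   assert (g * g * 8 * beta * Zn A n beta B * cc A n j <= g * g * 8 * beta * Zn A n beta B * g) by nra.
   unfold K. simpl. nra. }
 unfold Expect.
 apply Rmult_le_reg_l with (r := INR n); auto.
 rewrite <- Rmult_assoc, Rinv_r by lra. rewrite Rmult_1_l.
 apply Rmult_le_reg_r with (r := Zn A n beta B); auto.
 unfold Rdiv. rewrite Rmult_assoc, Rinv_l by lra. lra.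
Qed.
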